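(* Let $G$ be a finite abelian group and $k$ a positive integer such that: (1) $|G| = k^2$ and $\exp(G)$ divides $k$; (2) $N \le G$ with $|N| = k$; (3) the product of all elements of $N$ is $1$; (4) the product of all elements of the quotient group $G/N$ is the identity coset $N$. Then for any listing $N = [n_1, \ldots, n_k]$ there is a complete set of left coset representatives $T = [t_1,\dots,t_k]$ of $N$ in $G$ such that the table of $G$ based on $N$ and $T$ is a pandiagonal magic Cayley-sudoku table.
   Context: All groups are finite and written multiplicatively with identity $1$; $\exp(G)$ is the exponent of $G$. A Cayley table of $G$ is a square array whose rows are labeled by a listing of all elements of $G$ and columns by a listing of all elements of $G$, the entry in row labeled $r$ and column labeled $c$ being $rc$; its body is the array of entries. A Cayley-sudoku table of $G$ is a Cayley table of $G$ whose body is partitioned into uniformly sized rectangular blocks (each block formed by a set of consecutive rows and consecutive columns) such that each element of $G$ appears exactly once in each block. In a $k\times k$ array, a broken diagonal is the list of entries in positions $(\ell, \ell + j)$, $\ell = 1, \ldots, k$, for fixed $j \in \{1, \ldots, k\}$, and a broken antidiagonal is the list of entries in positions $(\ell, j-\ell)$, $\ell=1,\dots,k$, for fixed $j$, indices mod $k$ with representatives in $\{1,\dots,k\}$. Row products are taken left to right; column, broken diagonal and broken antidiagonal products top to bottom. A Cayley-sudoku table is pandiagonal magic if its blocks are square and every row, column, broken diagonal and broken antidiagonal product of each block equals $1$. Given $N = [n_1, \ldots, n_k]$ and a complete set of left coset representatives $T = [t_1, \ldots, t_k]$ of $N$ in $G$, the table of $G$ based on $N$ and $T$ is the Cayley table of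 $G$ whose rows, top to bottom, are labeled $t_1 n_1, \ldots, t_k n_1, t_1 n_2, \ldots, t_k n_2, \ldots, t_1 n_k, \ldots, t_k n_k$ and whose columns, left to right, are labeled $n_1 t_1, \ldots, n_k t_1, n_1 t_2, \ldots, n_k t_2, \ldots, n_1 t_k, \ldots, n_k t_k$, with body partitioned into the $k^2$ blocks of size $k\times k$ given by rows $\{t_1 n_m,\dots,t_k n_m\}$ and columns $\{n_1 t_i,\dots,n_k t_i\}$, $1\le m,i\le k$. *)

(* Defs.v *)
From mathcomp Require Import all_boot all_fingroup abelian.
Set Implicit Arguments. Unset Strict Implicit. Unset Printing Implicit Defensive.
Local Open Scope group_scope.

Section CayleySudoku.
Variable gT : finGroupType.

Definition is_listing (N : {set gT}) (k : nat) (n : seq gT) : Prop :=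
  size n = k /\ uniq n /\ (forall x, (x \in n) = (x \in N)).

Definition left_transversal_seq (N G : {set gT}) (k : nat) (t : seq gT) : Prop :=
  [/\ size t = k, {subset t <= G},
      uniq [seq x *: N | x <- t]
    & forall g, g \in G -> exists2 x, x \in t & g \in x *: N].

(* Row (m,a) of the table (0-based; block-row m, row a inside the block)
   is labeled t_a n_m; column (i,b) is labeled n_b t_i. *)
Definition row_label (k : nat) (n t : seq gT) (p : 'I_k * 'I_k) : gT :=
  nth 1 t p.2 * nth 1 n p.1.
Definition col_label (k : nat) (n t : seq gT) (p : 'I_k * 'I_k) : gT :=
  nth 1 n p.2 * nth 1 t p.1.

Definition block_entry (n t : seq gT) (m i a b : nat) : gT :=
  (nth 1 t a * nth 1 n m) * (nth 1 n b * nth 1 t i).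

Definition is_cayley_table (G : {set gT}) (k : nat) (n t : seq gT) : Prop :=
  [/\ injective (@row_label k n t), forall p, @row_label k n t p \in G
    & forall g, g \in G -> exists p, @row_label k n t p = g] /\
  [/\ injective (@col_label k n t), forall p, @col_label k n t p \in G
    & forall g, g \in G -> exists p, @col_label k n t p = g].

Definition is_sudoku (G : {set gT}) (k : nat) (n t : seq gT) : Prop :=
  forall m i : 'I_k, forall g, g \in G ->
    #|[set p : 'I_k * 'I_k | block_entry n t m i p.1 p.2 == g]| = 1%N.

(* Pandiagonal magic: in each (square, k x k) block, every row, column,
   broken diagonal and broken antidiagonal product equals 1.
   0-based: broken diagonal c = positions (a, (a+c) mod k),
   broken antidiagonal c = positions (a, (c-a) mod k). *)
Definition is_pandiagonal_magic_blocks (k : nat) (n t : seq gT) : Prop :=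
  forall m i c : 'I_k,
    [/\ \prod_(b < k) block_entry n t m i c b = 1,
        \prod_(a < k) block_entry n t m i a c = 1,
        \prod_(a < k) block_entry n t m i a ((a + c) %% k) = 1
      & \prod_(a < k) block_entry n t m i a ((c + k - a) %% k) = 1].

Definition pandiagonal_magic_cayley_sudoku (G : {set gT}) (k : nat)
  (n t : seq gT) : Prop :=
  [/\ is_cayley_table G k n t, is_sudoku G k n t
    & is_pandiagonal_magic_blocks k n t].

End CayleySudoku.

(* Main.v *)
Require Import Defs.
From mathcomp Require Import all_boot all_fingroup abelian.
From mathcomp Require Import zify.
Local Open Scope group_scope.

Lemma size_index_enum_ord k : size (index_enum 'I_k) = k.
Proof. by rewrite [index_enum _]unlock -enumT size_enum_ord. Qed.

Lemma big_enumg (gT : finGroupType) (T : finType) (A : {pred T}) (F : T -> gT) :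
  \prod_(i <- enum A) F i = \prod_(i in A) F i.
Proof. by rewrite -[RHS]big_filter [index_enum _]unlock. Qed.

Set Implicit Arguments. Unset Strict Implicit.
Section Helpers.
Variable gT : finGroupType.
Variable G : {group gT}.
Hypothesis cGG : abelian G.

Lemma commG x y : x \in G -> y \in G -> commute x y.
Proof. by move=> xG yG; apply: (centP (subsetP cGG x xG)). Qed.

Lemma prodG (s : seq gT) : {subset s <= G} -> \prod_(x <- s) x \in G.
Proof.
elim: s => [|y s IH] sG; first by rewrite big_nil group1.
rewrite big_cons groupM ?(sG y) ?mem_head //; apply: IH => z zs.
by apply: sG; rewrite inE zs orbT.
Qed.

Lemma prod_rem (s : seq gT) x : {subset s <= G} -> x \in s ->
  \prod_(y <- s) y = x * \prod_(y <- rem x s) y.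
Proof.
elim: s => [|y s IH] sG xs //=.
rewrite big_cons; case: eqP => [->|nyx]; first by [].
rewrite big_cons.
have xs' : x \in s.
  move: xs; rewrite inE => /orP[/eqP exy|//]; by case: nyx.
have sG' : {subset s <= G} by move=> z zs; apply: sG; rewrite inE zs orbT.
rewrite (IH sG' xs') !mulgA; congr (_ * _); apply: commG.
  by apply: sG; rewrite mem_head.
by apply: sG'.
Qed.

Lemma prod_perm (s1 s2 : seq gT) : {subset s2 <= G} -> perm_eq s1 s2 ->
  \prod_(x <- s1) x = \prod_(x <- s2) x.
Proof.
elim: s1 s2 => [|x s1 IH] s2 sG ps.
  by move/perm_size: ps => /esym/size0nil ->.
have xs2 : x \in s2 by rewrite -(perm_mem ps) mem_head.
rewrite big_cons (prod_rem sG xs2) (IH (rem x s2)) //.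
  by move=> z /mem_rem; apply: sG.
by rewrite -(perm_cons x) (perm_trans ps (perm_to_rem xs2)).
Qed.

Lemma prod_split (I : Type) (r : seq I) (F H : I -> gT) :
  (forall i, F i \in G) -> (forall i, H i \in G) ->
  \prod_(i <- r) (F i * H i) = \prod_(i <- r) F i * \prod_(i <- r) H i.
Proof.
move=> FG HG; elim: r => [|a r IH]; first by rewrite !big_nil mulg1.
rewrite !big_cons IH -!mulgA; congr (_ * _); rewrite !mulgA; congr (_ * _).
by apply: commG => //; apply: group_prod => i _.
Qed.

Lemma prod_const_ord k (x : gT) : \prod_(i < k) x = x ^+ k.
Proof.
elim: k => [|k IH]; first by rewrite big_ord0.
by rewrite big_ord_recr /= IH expgSr.
Qed.

End Helpers.
Unset Implicit Arguments.


Theorem theorem4p1 (gT : finGroupType) (G N : {group gT}) (k : nat) :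
  0 < k -> abelian G ->
  #|G| = (k ^ 2)%N -> exponent G %| k ->
  N \subset G -> #|N| = k ->
  \prod_(x in N) x = 1 ->
  \prod_(C in G / N) C = 1 ->
  forall n : seq gT, is_listing N k n ->
  exists t : seq gT,
    left_transversal_seq N G k t /\ pandiagonal_magic_cayley_sudoku G k n t.
Proof.
move=> k0 cGG oG expGk sNG oN pN pGN n [sn [un mn]].
have nNG : G \subset 'N(N) := sub_abelian_norm cGG sNG.
have inN : forall x, x \in G -> x \in 'N(N) by move=> x; apply: (subsetP nNG).
have NG : forall x, x \in N -> x \in G by move=> x; apply: (subsetP sNG).
have nN : forall b, b < k -> nth 1 n b \in N.
  by move=> b hb; rewrite -mn mem_nth // sn.
have nG : forall b, nth 1 n b \in G.
  move=> b; case: (ltnP b (size n)) => hb; first by rewrite NG // nN // -sn.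
  by rewrite nth_default.
have xk : forall x, x \in G -> x ^+ k = 1.
  by move=> x xG; case/dvdnP: expGk => q ->; rewrite mulnC expgM expg_exponent // expg1n.
have cardQ : #|G / N| = k.
  rewrite card_quotient //; have := Lagrange sNG; rewrite oG oN => h.
  by apply/eqP; rewrite -(eqn_pmul2l k0) h mulnn.
pose t0 := [seq repr C | C : coset_of N <- enum (G / N)].
have t0map : map (coset N) t0 = enum (G / N).
  by rewrite -map_comp (eq_map (@coset_reprK _ _)) map_id.
have t0G : {subset t0 <= G}.
  move=> x /mapP [C]; rewrite mem_enum => /morphimP [y yN yG ->] ->.
  have := mem_repr_coset (coset N y); rewrite val_coset // => /rcosetP [a aN ->].
  by rewrite groupM // NG.
have t0k : size t0 = k by rewrite size_map -cardE.
set p := \prod_(x <- t0) x.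
have pG : p \in G by apply: prodG.
have pNN : p \in N.
  apply: coset_idr; first exact: inN.
  rewrite /p big_seq (morph_prod (coset_morphism N)); last by move=> x /t0G /inN.
  rewrite -big_seq; transitivity (\prod_(C <- enum (G / N)) C).
    by rewrite -t0map !big_map.
  by rewrite big_enumg.
have [t [tk tG tmap tprod]] : exists t : seq gT, [/\ size t = k, {subset t <= G},
    map (coset N) t = enum (G / N) & \prod_(x <- t) x = 1].
  have pdef : p = \prod_(x <- t0) x by [].
  clearbody p; move: pdef; rename p into pp; rename pG into ppG; rename pNN into ppN.
  case E: t0 t0k t0G t0map => [|x0 r] //=; first by move=> h; rewrite -h in k0.
  move=> rk rG rmap pdef.
  have x0G : x0 \in G by apply: rG; rewrite mem_head.
  have RG : \prod_(x <- r) x \in G.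
    by apply: prodG => z zr; apply: rG; rewrite inE zr orbT.
  exists ((x0 * pp^-1) :: r); split => //.
  - move=> z; rewrite inE => /orP [/eqP ->|zr].
      by rewrite groupM ?groupV.
    by apply: rG; rewrite inE zr orbT.
  - by rewrite /= coset_kerr ?groupV.
  rewrite big_cons -mulgA (commG cGG (groupVr ppG) RG) mulgA.
  by rewrite pdef big_cons mulgV.
have tnG : forall a, nth 1 t a \in G.
  move=> a; case: (ltnP a (size t)) => ha; first by rewrite tG // mem_nth.
  by rewrite nth_default.
have tuniq : uniq (map (coset N) t) by rewrite tmap enum_uniq.
have tinj : forall a a', a < k -> a' < k ->
    coset N (nth 1 t a) = coset N (nth 1 t a') -> a = a'.
  move=> a a' ha ha'; rewrite -!(nth_map 1 (coset N 1)) ?tk // => /eqP.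
  by rewrite nth_uniq ?size_map ?tk // => /eqP.
have tsurj : forall g, g \in G -> exists2 a, a < k & coset N (nth 1 t a) = coset N g.
  move=> g gG; have : coset N g \in map (coset N) t by rewrite tmap mem_enum mem_quotient.
  case/mapP => x xt ->; exists (index x t); first by rewrite -tk index_mem.
  by rewrite nth_index.
have ninj : forall b b', b < k -> b' < k -> nth 1 n b = nth 1 n b' -> b = b'.
  by move=> b b' hb hb' /eqP; rewrite nth_uniq ?sn // => /eqP.
have rinj : injective (@row_label _ k n t).
  move=> [m a] [m' a']; rewrite /row_label /= => e.
  have ea : a = a'.
    apply/val_inj/(tinj _ _ (ltn_ord a) (ltn_ord a')); move: (congr1 (coset N) e).
    by rewrite !coset_kerr ?nN.
  subst a'; move/mulgI: e => /ninj e.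
  by congr pair; apply/val_inj/e.
have rG : forall q, @row_label _ k n t q \in G.
  by move=> q; rewrite /row_label groupM.
have rsurj : forall g, g \in G -> exists q, @row_label _ k n t q = g.
  move=> g gG; have [a ha ea] := tsurj g gG.
  have hN : (nth 1 t a)^-1 * g \in N.
    apply: coset_idr; first by rewrite inN // groupM ?groupV.
    by rewrite morphM ?morphV ?inN ?groupV //= ea mulVg.
  have hn : (nth 1 t a)^-1 * g \in n by rewrite mn.
  have hm : index ((nth 1 t a)^-1 * g) n < k by rewrite -sn index_mem.
  exists (Ordinal hm, Ordinal ha); rewrite /row_label /= nth_index //.
  by rewrite mulKVg.
have colrow : forall i b : 'I_k, @col_label _ k n t (i, b) = @row_label _ k n t (b, i).
  by move=> i b; rewrite /col_label /row_label /= (commG cGG (nG _) (tnG _)).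
have lr : forall x, x \in G -> x *: N = (coset N x : {set gT}).
  move=> x xG; rewrite val_coset ?inN //; apply/setP => y.
  apply/lcosetP/rcosetP => [[a aN ->]|[a aN ->]]; exists a => //.
    by rewrite (commG cGG xG (NG a aN)).
  by rewrite (commG cGG xG (NG a aN)).
have PA : \prod_(a < k) nth 1 t a = 1.
  by rewrite -[RHS]tprod (big_nth 1) tk big_mkord.
have PB : forall s : nat -> nat, (forall a, a < k -> s a < k) ->
    (forall a a', a < k -> a' < k -> s a = s a' -> a = a') ->
    \prod_(a < k) nth 1 n (s a) = 1.
  move=> s sk sinj.
  pose F := fun a : 'I_k => nth 1 n (s a).
  have -> : \prod_(a < k) nth 1 n (s a) = \prod_(x <- map F (index_enum 'I_k)) x.
    by rewrite big_map.
  have us : uniq (map F (index_enum 'I_k)).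
    rewrite map_inj_in_uniq ?index_enum_uniq // => a a' _ _.
    move/(ninj _ _ (sk _ (ltn_ord a)) (sk _ (ltn_ord a'))) => h.
    exact/val_inj/(sinj _ _ (ltn_ord a) (ltn_ord a') h).
  have ss : {subset map F (index_enum 'I_k) <= enum N}.
    by move=> x /mapP [a _ ->]; rewrite mem_enum nN // sk.
  have [_ eqm] := uniq_min_size us ss
    (eq_leq (etrans (etrans (esym (cardE N)) oN) (esym (etrans (size_map _ _) (size_index_enum_ord k))))).
  have sG : {subset enum N <= G} by move=> x; rewrite mem_enum; apply: NG.
  by rewrite (prod_perm cGG sG (uniq_perm us (enum_uniq _) eqm)) big_enumg.
have PB0 : \prod_(b < k) nth 1 n b = 1 := PB id (fun a h => h) (fun a a' _ _ h => h).
have Pdiag : forall (m i : nat) s, (forall a, a < k -> s a < k) ->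
    (forall a a', a < k -> a' < k -> s a = s a' -> a = a') ->
    \prod_(a < k) block_entry n t m i a (s a) = 1.
  move=> m i s sk sinj; rewrite /block_entry.
  transitivity (\prod_(a < k) (nth 1 t a * ((nth 1 n m * nth 1 t i) * nth 1 n (s a)))).
    apply: eq_bigr => a _; rewrite -!mulgA; congr (_ * _); congr (_ * _).
    by rewrite (commG cGG (nG (s a)) (tnG i)).
  rewrite (prod_split cGG _ (fun a : 'I_k => tnG a) (fun a : 'I_k => groupM (groupM (nG m) (tnG i)) (nG (s a)))).
  rewrite PA mul1g (prod_split cGG _ (fun a : 'I_k => groupM (nG m) (tnG i)) (fun a : 'I_k => nG (s a))).
  by rewrite prod_const_ord xk ?groupM // mul1g (PB s sk sinj).
have be : forall (m i : nat) (a b : 'I_k),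
    block_entry n t m i a b = @row_label _ k n t (b, a) * (nth 1 n m * nth 1 t i).
  move=> m i a b; rewrite /block_entry /row_label /= -!mulgA; congr (_ * _).
  by rewrite !mulgA (commG cGG (nG m) (nG b)).
exists t; split.
  split => //.
  - have -> : [seq x *: N | x <- t] = [seq (coset N x : {set gT}) | x <- t].
      by apply/eq_in_map => x /tG xG; rewrite lr.
    by rewrite (map_comp (fun C : coset_of N => (C : {set gT})) (coset N)) map_inj_uniq // => C D /val_inj.
  move=> g gG; have [a ha ea] := tsurj g gG.
  exists (nth 1 t a); first by rewrite mem_nth // tk.
  by rewrite lr ?tnG // ea val_coset ?inN // rcoset_refl.
split.
- split; split => //.
  + move=> [i b] [i' b']; rewrite !colrow => /rinj [-> ->] //.
  + by move=> [i b]; rewrite colrow.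
  + by move=> g /rsurj [[b i] e]; exists (i, b); rewrite colrow.
- move=> m i g gG.
  have wG : nth 1 n m * nth 1 t i \in G by rewrite groupM.
  have [[qb qa] eq] := rsurj (g * (nth 1 n m * nth 1 t i)^-1) (groupM gG (groupVr wG)).
  suff -> : [set p : 'I_k * 'I_k | block_entry n t m i p.1 p.2 == g] = [set (qa, qb)].
    by rewrite cards1.
  apply/setP => -[a b]; rewrite in_set in_set1 (be m i a b) xpair_eqE.
  apply/eqP/andP => [e|[/eqP -> /eqP ->]].
    have : @row_label _ k n t (b, a) = @row_label _ k n t (qb, qa) by rewrite eq -e mulgK.
    by move/rinj => [-> ->].
  by rewrite eq mulgKV.
move=> m i c; split.
- rewrite /block_entry.
  transitivity (\prod_(b < k) ((nth 1 t c * nth 1 n m * nth 1 t i) * nth 1 n b)).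
    by apply: eq_bigr => b _; rewrite -!mulgA (commG cGG (nG b) (tnG i)).
  rewrite (prod_split cGG _ (fun _ : 'I_k => groupM (groupM (tnG c) (nG m)) (tnG i)) (fun b : 'I_k => nG b)).
  by rewrite prod_const_ord xk ?groupM // PB0 mulg1.
- rewrite /block_entry.
  transitivity (\prod_(a < k) (nth 1 t a * (nth 1 n m * (nth 1 n c * nth 1 t i)))).
    by apply: eq_bigr => a _; rewrite -!mulgA.
  rewrite (prod_split cGG _ (fun a : 'I_k => tnG a) (fun _ : 'I_k => groupM (nG m) (groupM (nG c) (tnG i)))).
  by rewrite PA prod_const_ord xk ?groupM // mulg1.
- apply: (Pdiag m i (fun a => (a + c) %% k)) => [a _|a a' ha ha'].
    exact: ltn_pmod.
  by move/eqP; rewrite eqn_modDr !modn_small // => /eqP.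
apply: (Pdiag m i (fun a => (c + k - a) %% k)) => [a _|a a' ha ha' e].
  exact: ltn_pmod.
have h1 : (c + k - a + (a + a') == c + k - a' + (a + a') %[mod k]).
  by rewrite eqn_modDr e.
have e1 : c + k - a + (a + a') = (c + k) + a' by lia.
have e2 : c + k - a' + (a + a') = (c + k) + a by lia.
by move: h1; rewrite e1 e2 eqn_modDl !modn_small // => /eqP.
Qed.
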